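(* For every $x^*\in J^*$, $$\|x^*\|_*=\sup\{x^*(x):\ x\in J\text{ has NPR hereditarily and }\|x\|_2=1\}.$$
   Context: For a real sequence $x=(x(n))_{n\in\mathbb N}$ let $\|x\|_J=\sup\bigl(\sum_{i=1}^n|\sum_{k\in I_i}x(k)|^2\bigr)^{1/2}$ over all $n$ and all families of pairwise disjoint intervals $I_1,\dots,I_n$ of $\mathbb N$ (intervals: nonempty sets of consecutive positive integers, possibly infinite). $J=\{x:\|x\|_J<\infty\}$; $J^*$ is its dual with norm $\|\cdot\|_*$; $\|\cdot\|_2$ is the $\ell_2$ norm; for $x\in J$ the series $\sum_{n\in I}x(n)$ converge for every interval $I$. For $A\subset\mathbb N$, $x|_A$ equals $x$ on $A$ and $0$ off $A$. A vector $x\in J$ has non-positive remainder (NPR) if $|\sum_n x(n)|^2\le\sum_n|x(n)|^2$; it has NPR hereditarily if $x|_I$ has NPR for every interval $I$ of $\mathbb N$. *)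

(* Defs.v *)
From Stdlib Require Import Reals Lra List.
From Coquelicot Require Import Coquelicot.
Open Scope R_scope.

(* Sequences x : nat -> R; index n : nat stands for the positive integer n+1. *)

(* An interval of N: [lo, b] (finite, lo <= b) or [lo, oo) (infinite). *)
Record interval := Ival { ilo : nat; ihi : option nat }.

Definition valid_interval (I : interval) : Prop :=
  match ihi I with Some b => (ilo I <= b)%nat | None => True end.

Definition in_interval (I : interval) (k : nat) : Prop :=
  (ilo I <= k)%nat /\ match ihi I with Some b => (k <= b)%nat | None => True end.

Definition disjoint_intervals (I1 I2 : interval) : Prop :=
  forall k, ~ (in_interval I1 k /\ in_interval I2 k).

Definition isum (x : nat -> R) (I : interval) : R :=
  match ihi I with
  | Some b => sum_f_R0 (fun k => x (ilo I + k)%nat) (b - ilo I)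
  | None => Series (fun k => x (ilo I + k)%nat)
  end.

Definition admissible_family (l : list interval) : Prop :=
  List.Forall valid_interval l /\ List.ForallOrdPairs disjoint_intervals l.

Definition sq_sum (x : nat -> R) (l : list interval) : R :=
  fold_right (fun I acc => (Rabs (isum x I))^2 + acc) 0 l.

Definition in_J (x : nat -> R) : Prop :=
  (forall a : nat, ex_series (fun k => x (a + k)%nat)) /\
  exists M : R, forall l, admissible_family l -> sq_sum x l <= M.

(* ||x||_J (meaningful for x in J) *)
Definition Jnorm (x : nat -> R) : R :=
  sqrt (real (Lub_Rbar (fun r => exists l, admissible_family l /\ r = sq_sum x l))).

Definition l2norm (x : nat -> R) : R := sqrt (Series (fun n => (Rabs (x n))^2)).

Definition in_Jdual (f : (nat -> R) -> R) : Prop :=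
  (forall x y, in_J x -> in_J y -> f (fun n => x n + y n) = f x + f y) /\
  (forall c x, in_J x -> f (fun n => c * x n) = c * f x) /\
  exists C : R, forall x, in_J x -> Rabs (f x) <= C * Jnorm x.

Definition Jdualnorm (f : (nat -> R) -> R) : Rbar :=
  Lub_Rbar (fun r => exists x, in_J x /\ Jnorm x <= 1 /\ r = Rabs (f x)).

Definition in_intervalb (I : interval) (k : nat) : bool :=
  (Nat.leb (ilo I) k) && match ihi I with Some b => Nat.leb k b | None => true end.

Definition restrict (x : nat -> R) (I : interval) : nat -> R :=
  fun n => if in_intervalb I n then x n else 0.

Definition NPR (x : nat -> R) : Prop :=
  (Rabs (Series x))^2 <= Series (fun n => (Rabs (x n))^2).

Definition NPR_hereditary (x : nat -> R) : Prop :=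
  forall I : interval, valid_interval I -> NPR (restrict x I).

(* Main.v *)
Require Import Defs.
From Stdlib Require Import Reals.
From Coquelicot Require Import Coquelicot.
Open Scope R_scope.
From Stdlib Require Import Lra Lia List Classical FunctionalExtensionality.
Import ListNotations.


Fixpoint ps (x : nat -> R) (m : nat) : R :=
  match m with O => 0 | S m' => ps x m' + x m' end.

Lemma sum_f_ps : forall a n, sum_f_R0 a n = ps a (S n).
Proof. intros a n; induction n; simpl in *; [lra|]. rewrite IHn; simpl; lra. Qed.

Lemma sum_n_ps : forall (a : nat -> R) n, sum_n a n = ps a (S n).
Proof. intros; rewrite sum_n_Reals; apply sum_f_ps. Qed.

Lemma is_series_ps : forall a (l : R), is_series a l <-> is_lim_seq (ps a) l.
Proof.
  intros a l. split; intro H.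
  - apply is_lim_seq_incr_1.
    apply is_lim_seq_ext with (u := sum_n a). intro n; apply sum_n_ps.
    exact H.
  - apply is_lim_seq_incr_1 in H.
    assert (H2 : is_lim_seq (sum_n a) l).
    { apply is_lim_seq_ext with (u := fun n => ps a (S n)). intro n; symmetry; apply sum_n_ps. exact H. }
    exact H2.
Qed.

Lemma ps_ext : forall a b m, (forall n, (n < m)%nat -> a n = b n) -> ps a m = ps b m.
Proof. intros a b m H; induction m; simpl; auto. rewrite IHm by (intros; apply H; lia). rewrite H by lia; auto. Qed.

Lemma ps_plus : forall a b m, ps (fun n => a n + b n) m = ps a m + ps b m.
Proof. intros; induction m; simpl; lra. Qed.
Lemma ps_scal : forall c a m, ps (fun n => c * a n) m = c * ps a m.
Proof. intros; induction m; simpl; lra. Qed.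

Lemma ps_const_after : forall a N m, (forall n, (N <= n)%nat -> a n = 0) -> (N <= m)%nat -> ps a m = ps a N.
Proof.
  intros a N m H Hm. induction Hm; auto. simpl. rewrite H by lia. lra.
Qed.

Lemma is_series_fin : forall a N, (forall n, (N <= n)%nat -> a n = 0) -> is_series a (ps a N).
Proof.
  intros a N H. apply is_series_ps.
  apply is_lim_seq_ext_loc with (u := fun _ => ps a N).
  - exists N. intros n Hn. symmetry. apply ps_const_after; auto.
  - apply is_lim_seq_const.
Qed.

Lemma Series_fin : forall a N, (forall n, (N <= n)%nat -> a n = 0) -> Series a = ps a N.
Proof. intros; apply is_series_unique, is_series_fin; auto. Qed.

Lemma ex_series_fin : forall a N, (forall n, (N <= n)%nat -> a n = 0) -> ex_series a.
Proof. intros; eexists; apply is_series_fin; eauto. Qed.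

Lemma ps_shift : forall x lo m, ps (fun k => x (lo + k)%nat) m = ps x (lo + m) - ps x lo.
Proof. intros; induction m; simpl. rewrite Nat.add_0_r; lra. rewrite IHm. replace (lo + S m)%nat with (S (lo + m)) by lia. simpl; lra. Qed.

Lemma isum_fin : forall x lo b, (lo <= b)%nat -> isum x (Ival lo (Some b)) = ps x (S b) - ps x lo.
Proof.
  intros x lo b H. unfold isum; simpl. rewrite sum_f_ps, ps_shift.
  replace (lo + S (b - lo))%nat with (S b) by lia. auto.
Qed.

Lemma is_series_shift : forall x lo (L : R), is_series x L -> is_series (fun k => x (lo + k)%nat) (L - ps x lo).
Proof.
  intros x lo L H. apply is_series_ps. apply is_series_ps in H.
  apply is_lim_seq_ext with (u := fun m => ps x (lo + m) - ps x lo).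
  intro; symmetry; apply ps_shift.
  apply is_lim_seq_minus'. 2: apply is_lim_seq_const.
  apply is_lim_seq_incr_n with (N := lo) in H.
  apply is_lim_seq_ext with (u := fun n => ps x (n + lo)). intro; f_equal; lia. auto.
Qed.

Lemma isum_inf : forall x lo, ex_series x -> isum x (Ival lo None) = Series x - ps x lo.
Proof.
  intros x lo [L H]. unfold isum; simpl. rewrite (is_series_unique _ _ H).
  apply is_series_unique, is_series_shift; auto.
Qed.

Lemma ex_series_of_J : forall x, in_J x -> ex_series x.
Proof. intros x [H _]. apply ex_series_ext with (a := fun k => x (0 + k)%nat); auto. Qed.


Lemma sq_sum_cons : forall x I l, sq_sum x (I :: l) = (Rabs (isum x I))^2 + sq_sum x l.
Proof. reflexivity. Qed.
Lemma sq_sum_nil : forall x, sq_sum x [] = 0.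
Proof. reflexivity. Qed.

Definition tails_ok (x : nat -> R) := forall a : nat, ex_series (fun k => x (a + k)%nat).

Lemma isum_plus : forall x y I, tails_ok x -> tails_ok y ->
  isum (fun n => x n + y n) I = isum x I + isum y I.
Proof.
  intros x y [lo [b|]] Hx Hy; unfold isum; simpl.
  - apply sum_plus.
  - apply Series_plus; auto.
Qed.

Lemma isum_scal : forall c x I, isum (fun n => c * x n) I = c * isum x I.
Proof.
  intros c x [lo [b|]]; unfold isum; simpl.
  - rewrite scal_sum. apply sum_eq. intros; lra.
  - apply Series_scal_l.
Qed.

Lemma sq_sum_plus_le : forall x y l, tails_ok x -> tails_ok y ->
  sq_sum (fun n => x n + y n) l <= 2 * sq_sum x l + 2 * sq_sum y l.
Proof.
  intros x y l Hx Hy; induction l as [|I l IH]; rewrite ?sq_sum_nil, ?sq_sum_cons; [lra|].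
  rewrite isum_plus by auto. rewrite !pow2_abs.
  assert (0 <= (isum x I - isum y I)^2) by (apply pow2_ge_0). nra.
Qed.

Lemma sq_sum_scal : forall c x l, sq_sum (fun n => c * x n) l = c^2 * sq_sum x l.
Proof.
  intros c x l; induction l as [|I l IH]; rewrite ?sq_sum_nil, ?sq_sum_cons; [lra|].
  rewrite isum_scal, IH, !pow2_abs. lra.
Qed.

Lemma sq_sum_ge0 : forall x l, 0 <= sq_sum x l.
Proof. intros; induction l; rewrite ?sq_sum_nil, ?sq_sum_cons; [lra|]. pose proof (pow2_ge_0 (Rabs (isum x a))); lra. Qed.

Lemma in_J_plus : forall x y, in_J x -> in_J y -> in_J (fun n => x n + y n).
Proof.
  intros x y [Hx [Mx HMx]] [Hy [My HMy]]. split.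
  - intro a. apply (ex_series_plus (fun k => x (a+k)%nat) (fun k => y (a+k)%nat)); auto.
  - exists (2*Mx + 2*My). intros l Hl. eapply Rle_trans. apply sq_sum_plus_le; auto.
    specialize (HMx l Hl); specialize (HMy l Hl); lra.
Qed.

Lemma in_J_scal : forall c x, in_J x -> in_J (fun n => c * x n).
Proof.
  intros c x [Hx [Mx HMx]]. split.
  - intro a. apply (ex_series_scal_l c (fun k => x (a+k)%nat)); auto.
  - exists (c^2 * Mx). intros l Hl. rewrite sq_sum_scal.
    apply Rmult_le_compat_l; auto. apply pow2_ge_0.
Qed.

Definition Eset (x : nat -> R) := fun r => exists l, admissible_family l /\ r = sq_sum x l.

Lemma adm_nil : admissible_family [].
Proof. split; constructor. Qed.

Lemma Lub_le : forall x B, (forall l, admissible_family l -> sq_sum x l <= B) ->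
  0 <= real (Lub_Rbar (Eset x)) <= B.
Proof.
  intros x B H. destruct (Lub_Rbar_correct (Eset x)) as [Hub Hlub].
  assert (H0 : Rbar_le 0 (Lub_Rbar (Eset x))).
  { apply Hub. exists []. split; [apply adm_nil| reflexivity]. }
  assert (H1 : Rbar_le (Lub_Rbar (Eset x)) B).
  { apply Hlub. intros r [l [Hl ->]]. simpl. apply H; auto. }
  destruct (Lub_Rbar (Eset x)); simpl in *; try contradiction; lra.
Qed.

Lemma Lub_ge : forall x l, in_J x -> admissible_family l -> sq_sum x l <= real (Lub_Rbar (Eset x)).
Proof.
  intros x l [_ [M HM]] Hl. destruct (Lub_Rbar_correct (Eset x)) as [Hub Hlub].
  assert (H1 : Rbar_le (Lub_Rbar (Eset x)) M).
  { apply Hlub. intros r [l' [Hl' ->]]. simpl. apply HM; auto. }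
  assert (H2 : Rbar_le (sq_sum x l) (Lub_Rbar (Eset x))).
  { apply Hub. exists l; auto. }
  destruct (Lub_Rbar (Eset x)); simpl in *; try contradiction; lra.
Qed.

Lemma Jnorm_le : forall x B, (forall l, admissible_family l -> sq_sum x l <= B) -> Jnorm x <= sqrt B.
Proof.
  intros x B H. unfold Jnorm. apply sqrt_le_1_alt. apply (Lub_le x B H).
Qed.

Lemma Jnorm_sq_bound : forall x l, in_J x -> Jnorm x <= 1 -> admissible_family l -> sq_sum x l <= 1.
Proof.
  intros x l HJ Hn Hl. eapply Rle_trans. apply Lub_ge; eauto.
  change (sqrt (real (Lub_Rbar (Eset x))) <= 1) in Hn. set (r := real (Lub_Rbar (Eset x))) in *.
  assert (0 <= r). { apply Rle_trans with (sq_sum x l). apply sq_sum_ge0. apply Lub_ge; auto. }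
  pose proof (sqrt_sqrt r H). pose proof (sqrt_pos r). nra.
Qed.


Lemma in_intervalb_spec : forall I k, in_intervalb I k = true <-> in_interval I k.
Proof.
  intros [lo [b|]] k; unfold in_intervalb, in_interval; simpl.
  - rewrite Bool.andb_true_iff, !Nat.leb_le. tauto.
  - rewrite Bool.andb_true_iff, !Nat.leb_le. intuition.
Qed.

Lemma restrict_fin_eq : forall x lo b m,
  restrict x (Ival lo (Some b)) m = if andb (lo <=? m)%nat (m <=? b)%nat then x m else 0.
Proof. reflexivity. Qed.
Lemma restrict_inf_eq : forall x lo m,
  restrict x (Ival lo None) m = if (lo <=? m)%nat then x m else 0.
Proof. intros. unfold restrict, in_intervalb; simpl. rewrite Bool.andb_true_r. auto. Qed.

Lemma ps_restrict_fin : forall x lo b m, (lo <= b)%nat ->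
  ps (restrict x (Ival lo (Some b))) m = ps x (Nat.max lo (Nat.min m (S b))) - ps x lo.
Proof.
  intros x lo b m H. induction m.
  - simpl. replace (Nat.max lo 0) with lo by lia. lra.
  - change (ps (restrict x (Ival lo (Some b))) (S m)) with
      (ps (restrict x (Ival lo (Some b))) m + restrict x (Ival lo (Some b)) m).
    rewrite IHm, restrict_fin_eq.
    destruct (Nat.leb_spec lo m); destruct (Nat.leb_spec m b); cbv beta iota delta [andb].
    + replace (Nat.max lo (Nat.min (S m) (S b))) with (S m) by lia.
      replace (Nat.max lo (Nat.min m (S b))) with m by lia. simpl; lra.
    + replace (Nat.max lo (Nat.min (S m) (S b))) with (S b) by lia.
      replace (Nat.max lo (Nat.min m (S b))) with (S b) by lia. lra.
    + replace (Nat.max lo (Nat.min (S m) (S b))) with lo by lia.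
      replace (Nat.max lo (Nat.min m (S b))) with lo by lia. lra.
    + lia.
Qed.

Lemma ps_restrict_inf : forall x lo m,
  ps (restrict x (Ival lo None)) m = ps x (Nat.max lo m) - ps x lo.
Proof.
  intros x lo m. induction m.
  - simpl. replace (Nat.max lo 0) with lo by lia. lra.
  - change (ps (restrict x (Ival lo None)) (S m)) with
      (ps (restrict x (Ival lo None)) m + restrict x (Ival lo None) m).
    rewrite IHm, restrict_inf_eq.
    destruct (Nat.leb_spec lo m).
    + replace (Nat.max lo (S m)) with (S m) by lia. replace (Nat.max lo m) with m by lia. simpl; lra.
    + replace (Nat.max lo (S m)) with lo by lia. replace (Nat.max lo m) with lo by lia. lra.
Qed.



Lemma restrict_fin_zero : forall x lo b n, (S b <= n)%nat -> restrict x (Ival lo (Some b)) n = 0.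
Proof. intros. rewrite restrict_fin_eq. destruct (Nat.leb_spec n b); try lia.
  destruct (lo <=? n)%nat; simpl; auto. Qed.

Lemma is_series_restrict : forall x I, valid_interval I -> ex_series x ->
  is_series (restrict x I) (isum x I).
Proof.
  intros x [lo [b|]] HI Hx; unfold valid_interval in HI; simpl in HI.
  - rewrite isum_fin by auto.
    replace (ps x (S b) - ps x lo) with (ps (restrict x (Ival lo (Some b))) (S b))
      by (rewrite ps_restrict_fin by auto; do 3 f_equal; lia).
    apply is_series_fin. intros; apply restrict_fin_zero; auto.
  - rewrite isum_inf by auto. apply is_series_ps.
    apply is_lim_seq_ext_loc with (u := fun m => ps x m - ps x lo).
    + exists lo. intros n Hn. rewrite ps_restrict_inf. f_equal. f_equal. lia.
    + apply is_lim_seq_minus'. 2: apply is_lim_seq_const.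
      apply is_series_ps. apply Series_correct; auto.
Qed.

Lemma isum_restrict : forall x I, valid_interval I -> ex_series x ->
  isum x I = Series (restrict x I).
Proof. intros. symmetry. apply is_series_unique, is_series_restrict; auto. Qed.

Lemma ex_series_restrict_nonneg : forall a I, (forall n, 0 <= a n) -> ex_series a ->
  ex_series (restrict a I).
Proof.
  intros a I Ha Hs. apply (ex_series_le (restrict a I) a); auto.
  intro n. unfold restrict. destruct (in_intervalb I n).
  - unfold norm; simpl. unfold abs; simpl. rewrite Rabs_right; [lra| apply Rle_ge, Ha].
  - unfold norm; simpl. unfold abs; simpl. rewrite Rabs_R0. apply Ha.
Qed.

Definition rsum (a : nat -> R) (F : list interval) (n : nat) : R :=
  fold_right (fun I acc => restrict a I n + acc) 0 F.

Lemma rsum_cons : forall a I F n, rsum a (I :: F) n = restrict a I n + rsum a F n.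
Proof. reflexivity. Qed.

Lemma rsum_zero_notin : forall a F n, List.Forall (fun J => not (in_interval J n)) F -> rsum a F n = 0.
Proof.
  intros a F n H; induction H. reflexivity.
  rewrite rsum_cons, IHForall. unfold restrict. destruct (in_intervalb x n) eqn:E.
  - apply in_intervalb_spec in E; contradiction.
  - lra.
Qed.

Lemma rsum_le : forall a F n, (forall n, 0 <= a n) -> ForallOrdPairs disjoint_intervals F ->
  0 <= rsum a F n <= a n.
Proof.
  intros a F n Ha H; induction H. simpl. pose proof (Ha n); lra.
  rewrite rsum_cons. unfold restrict. destruct (in_intervalb a0 n) eqn:E.
  - apply in_intervalb_spec in E.
    assert (rsum a l n = 0).
    { apply rsum_zero_notin. eapply List.Forall_impl; [|exact H].
      intros J HJ HnJ. apply (HJ n); auto. }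
    rewrite H1. pose proof (Ha n); lra.
  - lra.
Qed.

Lemma is_series_rsum : forall a F, (forall n, 0 <= a n) -> ex_series a ->
  is_series (rsum a F) (fold_right (fun I acc => Series (restrict a I) + acc) 0 F).
Proof.
  intros a F Ha Hs; induction F as [|I F IH]; simpl.
  - apply is_series_ext with (a := fun _ => 0). reflexivity.
    apply (is_series_fin (fun _ => 0) 0). auto.
  - apply (is_series_plus (restrict a I) (rsum a F)); auto.
    apply Series_correct, ex_series_restrict_nonneg; auto.
Qed.

Lemma easy_bound : forall y F, ex_series y -> ex_series (fun n => (Rabs (y n))^2) ->
  NPR_hereditary y -> admissible_family F -> sq_sum y F <= Series (fun n => (Rabs (y n))^2).
Proof.
  intros y F Hy Hy2 HN [HV HD].
  set (a := fun n => (Rabs (y n))^2).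
  assert (Ha : forall n, 0 <= a n) by (intros; apply pow2_ge_0).
  apply Rle_trans with (fold_right (fun I acc => Series (restrict a I) + acc) 0 F).
  - clear HD. induction HV as [|I F HI HV IH]. rewrite sq_sum_nil; simpl; lra.
    rewrite sq_sum_cons. simpl. apply Rplus_le_compat; auto.
    rewrite isum_restrict by auto. specialize (HN I HI). unfold NPR in HN.
    eapply Rle_trans. exact HN. right. apply Series_ext. intro n. unfold a, restrict.
    destruct (in_intervalb I n); auto. rewrite Rabs_R0. simpl; lra.
  - rewrite <- (is_series_unique _ _ (is_series_rsum a F Ha Hy2)).
    apply Series_le; auto. intro n. apply rsum_le; auto.
Qed.


Fixpoint V (s : nat -> R) (i : nat) (l : list nat) : R :=
  match l with [] => 0 | b :: l' => (s b - s i)^2 + V s b l' end.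
Fixpoint ch (i j : nat) (l : list nat) : Prop :=
  match l with [] => i = j | b :: l' => (i < b)%nat /\ ch b j l' end.

Lemma V_ge0 : forall s l i, 0 <= V s i l.
Proof. intros s l; induction l; intros; simpl; [lra|]. pose proof (pow2_ge_0 (s a - s i)); pose proof (IHl a); lra. Qed.

Lemma ch_le : forall l i j, ch i j l -> (i <= j)%nat.
Proof. induction l; simpl; intros i j H; [lia|]. destruct H as [H1 H2]. apply IHl in H2; lia. Qed.

Lemma ch_in : forall l i j b, ch i j l -> In b l -> (i < b <= j)%nat.
Proof.
  induction l; simpl; intros i j b H Hb; [contradiction|]. destruct H as [H1 H2].
  destruct Hb as [<-|Hb]. pose proof (ch_le _ _ _ H2); lia.
  specialize (IHl _ _ _ H2 Hb); lia.
Qed.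

Lemma ch_app : forall l1 l2 i m j, ch i m l1 -> ch m j l2 -> ch i j (l1 ++ l2).
Proof. induction l1; simpl; intros l2 i m j H1 H2. subst; auto. destruct H1; split; eauto. Qed.

Lemma V_app : forall s l1 l2 i m, ch i m l1 -> V s i (l1 ++ l2) = V s i l1 + V s m l2.
Proof. induction l1; simpl; intros l2 i m H. subst; lra. destruct H. rewrite (IHl1 l2 a m); auto; lra. Qed.

Lemma ch_split_in : forall l i j k, ch i j l -> In k l ->
  exists l1 l2, l = l1 ++ l2 /\ ch i k l1 /\ ch k j l2.
Proof.
  induction l; simpl; intros i j k H Hk; [contradiction|]. destruct H as [H1 H2].
  destruct Hk as [<-|Hk].
  - exists [a], l. simpl; auto.
  - destruct (IHl _ _ _ H2 Hk) as [l1 [l2 [E [C1 C2]]]].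
    exists (a :: l1), l2. subst; simpl; auto.
Qed.

Lemma ch_nil_eq : forall l j, ch j j l -> l = [].
Proof. intros [|b l] j H; auto. simpl in H. destruct H as [H1 H2]. apply ch_le in H2; lia. Qed.

Lemma ch_last : forall l i j, ch i j l -> (i < j)%nat ->
  exists l' a, l = l' ++ [j] /\ ch i a l' /\ (a < j)%nat.
Proof.
  induction l; simpl; intros i j H Hij; [lia|]. destruct H as [H1 H2].
  destruct (Nat.eq_dec a j) as [->|Hne].
  - apply ch_nil_eq in H2; subst. exists [], i. simpl; auto.
  - pose proof (ch_le _ _ _ H2).
    destruct (IHl a j H2 ltac:(lia)) as [l' [c [E [C Hc]]]].
    exists (a :: l'), c. subst; simpl; auto.
Qed.

Lemma ch_last_in : forall l i j, ch i j l -> (i < j)%nat -> In j l.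
Proof.
  intros l i j H Hij. destruct (ch_last l i j H Hij) as [l' [a [E _]]]. subst.
  apply in_or_app; simpl; auto.
Qed.

Lemma V_ext : forall s s' l i, (forall m, m = i \/ In m l -> s m = s' m) -> V s i l = V s' i l.
Proof.
  intros s s' l; induction l; simpl; intros i H; auto.
  rewrite (H a), (H i), (IHl a); auto. intros m [->|Hm]; apply H; auto.
Qed.

Definition fin (a n : nat) : list nat := seq (S a) n.

Lemma ch_fin : forall n a, ch a (a + n) (fin a n).
Proof.
  induction n; intros a; unfold fin in *.
  - simpl. lia.
  - change (seq (S a) (S n)) with (S a :: seq (S (S a)) n). simpl. split. lia.
    replace (a + S n)%nat with (S a + n)%nat by lia. apply IHn.
Qed.

Lemma fin_app : forall a n1 n2, fin a (n1 + n2) = fin a n1 ++ fin (a + n1) n2.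
Proof. intros. unfold fin. rewrite seq_app. replace (S a + n1)%nat with (S (a + n1)) by lia. reflexivity. Qed.

Definition dsq (s : nat -> R) (m : nat) : R := (s (S m) - s m)^2.

Lemma V_fin : forall s n a, V s a (fin a n) = ps (dsq s) (a + n) - ps (dsq s) a.
Proof.
  intros s n; induction n; intros a; simpl. rewrite Nat.add_0_r; lra.
  rewrite IHn. replace (a + S n)%nat with (S a + n)%nat by lia. simpl. unfold dsq. lra.
Qed.

Fixpoint Mf (s : nat -> R) (f i j : nat) : R :=
  match f with
  | O => 0
  | S f' => if (i <? j)%nat then
       fold_right (fun b acc => Rmax ((s b - s i)^2 + Mf s f' b j) acc)
                  ((s j - s i)^2 + Mf s f' j j) (seq (S i) (j - S i))
     else 0
  end.

Lemma fold_Rmax_ge : forall (g : nat -> R) d L,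
  d <= fold_right (fun b acc => Rmax (g b) acc) d L /\
  forall b, In b L -> g b <= fold_right (fun b acc => Rmax (g b) acc) d L.
Proof.
  intros g d L; induction L; simpl. split; [lra| tauto].
  destruct IHL as [H1 H2]. split.
  - eapply Rle_trans; [exact H1| apply Rmax_r].
  - intros b [<-|Hb]. apply Rmax_l. eapply Rle_trans; [apply H2; auto| apply Rmax_r].
Qed.

Lemma fold_Rmax_att : forall (g : nat -> R) d L,
  fold_right (fun b acc => Rmax (g b) acc) d L = d \/
  exists b, In b L /\ fold_right (fun b acc => Rmax (g b) acc) d L = g b.
Proof.
  intros g d L; induction L; simpl; auto.
  destruct (Rle_dec (g a) (fold_right (fun b acc => Rmax (g b) acc) d L)).
  - rewrite Rmax_right by auto. destruct IHL as [H|[b [Hb E]]]. left; exact H. right; exists b; split; [right; exact Hb| exact E].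
  - rewrite Rmax_left by lra. right; exists a; split; [left; reflexivity| reflexivity].
Qed.

Lemma Mf_ub : forall s f i j l, (j - i <= f)%nat -> ch i j l -> V s i l <= Mf s f i j.
Proof.
  intros s f; induction f; intros i j l Hf H.
  - pose proof (ch_le _ _ _ H). assert (i = j) by lia. subst. apply ch_nil_eq in H; subst; simpl; lra.
  - simpl. destruct (Nat.ltb_spec i j).
    + destruct l as [|b l]; simpl in H. lia. destruct H as [Hb Hl].
      pose proof (ch_le _ _ _ Hl). simpl.
      assert (Hs : (s b - s i)^2 + V s b l <= (s b - s i)^2 + Mf s f b j).
      { apply Rplus_le_compat_l. apply IHf; auto; lia. }
      eapply Rle_trans; [exact Hs|].
      destruct (fold_Rmax_ge (fun b => (s b - s i)^2 + Mf s f b j) ((s j - s i)^2 + Mf s f j j)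
                 (seq (S i) (j - S i))) as [G1 G2].
      destruct (Nat.eq_dec b j) as [->|Hne]. exact G1.
      apply G2. apply in_seq. lia.
    + pose proof (ch_le _ _ _ H). assert (i = j) by lia. subst. apply ch_nil_eq in H; subst; simpl; lra.
Qed.

Lemma Mf_att : forall s f i j, (i <= j)%nat -> (j - i <= f)%nat ->
  exists l, ch i j l /\ V s i l = Mf s f i j.
Proof.
  intros s f; induction f; intros i j Hij Hf.
  - exists []. simpl. split. lia. reflexivity.
  - cbn [Mf]. destruct (Nat.ltb_spec i j).
    + destruct (fold_Rmax_att (fun b => (s b - s i)^2 + Mf s f b j) ((s j - s i)^2 + Mf s f j j)
                 (seq (S i) (j - S i))) as [E|[b [Hb E]]]; rewrite E.
      * destruct (IHf j j) as [l [C Vl]]; try lia. exists (j :: l). simpl. split. auto. rewrite Vl; auto.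
      * apply in_seq in Hb. destruct (IHf b j) as [l [C Vl]]; try lia.
        exists (b :: l). simpl. split. split; [lia|auto]. rewrite Vl; auto.
    + exists []. simpl. split. lia. reflexivity.
Qed.

Definition M (s : nat -> R) (i j : nat) : R := Mf s (j - i) i j.

Lemma M_ub : forall s i j l, ch i j l -> V s i l <= M s i j.
Proof. intros; apply Mf_ub; auto. Qed.
Lemma M_att : forall s i j, (i <= j)%nat -> exists l, ch i j l /\ V s i l = M s i j.
Proof. intros; apply Mf_att; auto. Qed.

Definition upd (s : nat -> R) (k : nat) (t : R) : nat -> R :=
  fun m => if (m =? k)%nat then s m + t else s m.

Lemma cont_plus : forall f g, continuity f -> continuity g -> continuity (fun t => f t + g t).
Proof. intros f g Hf Hg. apply (continuity_plus f g); auto. Qed.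
Lemma cont_minus : forall f g, continuity f -> continuity g -> continuity (fun t => f t - g t).
Proof. intros f g Hf Hg. apply (continuity_minus f g); auto. Qed.
Lemma cont_mult : forall f g, continuity f -> continuity g -> continuity (fun t => f t * g t).
Proof. intros f g Hf Hg. apply (continuity_mult f g); auto. Qed.
Lemma cont_const : forall c, continuity (fun _ => c).
Proof. intros c. apply continuity_const. intros x y; auto. Qed.
Lemma cont_id : continuity (fun t => t).
Proof. apply derivable_continuous, derivable_id. Qed.
Lemma cont_sq : forall f, continuity f -> continuity (fun t => (f t)^2).
Proof.
  intros f Hf. replace (fun t => (f t)^2) with (fun t => f t * f t).
  apply cont_mult; auto. apply functional_extensionality; intro; ring.
Qed.
Lemma cont_abs : forall f, continuity f -> continuity (fun t => Rabs (f t)).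
Proof. intros f Hf. apply (continuity_comp f Rabs); auto. apply Rcontinuity_abs. Qed.
Lemma Rmax_abs : forall a b, Rmax a b = (a + b + Rabs (a - b)) / 2.
Proof. intros. unfold Rmax. destruct (Rle_dec a b). rewrite Rabs_left1 by lra. field. rewrite Rabs_right by lra. field. Qed.
Lemma cont_max : forall f g, continuity f -> continuity g -> continuity (fun t => Rmax (f t) (g t)).
Proof.
  intros f g Hf Hg. replace (fun t => Rmax (f t) (g t)) with (fun t => (f t + g t + Rabs (f t - g t)) * / 2).
  apply cont_mult. apply cont_plus. apply cont_plus; auto. apply cont_abs, cont_minus; auto. apply cont_const.
  apply functional_extensionality; intro; rewrite Rmax_abs; unfold Rdiv; auto.
Qed.

Lemma cont_upd : forall s k m, continuity (fun t => upd s k t m).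
Proof. intros. unfold upd. destruct (m =? k)%nat. apply cont_plus. apply cont_const. apply cont_id. apply cont_const. Qed.

Lemma Mf_cont : forall s k f i j, continuity (fun t => Mf (upd s k t) f i j).
Proof.
  intros s k f; induction f; intros i j; simpl. apply cont_const.
  destruct (i <? j)%nat; [|apply cont_const].
  induction (seq (S i) (j - S i)); simpl.
  - apply cont_plus. apply cont_sq, cont_minus; apply cont_upd. apply IHf.
  - apply cont_max; auto. apply cont_plus. apply cont_sq, cont_minus; apply cont_upd. apply IHf.
Qed.

Lemma M_cont : forall s k i j, continuity (fun t => M (upd s k t) i j).
Proof. intros; unfold M; apply Mf_cont. Qed.


Lemma sign3 : forall a b c, 0 <= a * c \/ a * b <= 0 \/ b * c <= 0.
Proof.
  intros a b c. destruct (Rle_or_lt 0 (a*c)); auto. destruct (Rle_or_lt (a*b) 0); auto.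
  destruct (Rle_or_lt (b*c) 0); auto. exfalso.
  assert (0 < (a*b)*(b*c)) by nra. assert ((a*b)*(b*c) = (a*c)*(b*b)) by ring.
  assert (0 <= b*b) by nra. nra.
Qed.

Lemma monge1 : forall s i k j, (i <= k)%nat -> (S k <= j)%nat ->
  M s i (S k) + M s k j <= M s i j + (s (S k) - s k)^2.
Proof.
  intros s i k j Hik Hkj.
  destruct (M_att s i (S k)) as [A [CA VA]]; [lia|].
  destruct (M_att s k j) as [B [CB VB]]; [lia|].
  rewrite <- VA, <- VB.
  destruct (ch_last A i (S k) CA ltac:(lia)) as [A' [a [EA [CA' Ha]]]].
  destruct B as [|b B']. { simpl in CB. lia. }
  destruct CB as [Hb CB'].
  assert (VA2 : V s i A = V s i A' + (s (S k) - s a)^2).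
  { subst A. rewrite (V_app s A' [S k] i a CA'). simpl. lra. }
  assert (VB2 : V s k (b :: B') = (s b - s k)^2 + V s b B') by reflexivity.
  destruct (Nat.eq_dec a k) as [->|Hak].
  - assert (C : ch i j (A' ++ b :: B')). { apply ch_app with k; simpl; auto. }
    pose proof (M_ub s i j _ C). rewrite (V_app s A' (b::B') i k CA') in H.
    rewrite VA2, VB2 in *. simpl in H. lra.
  - destruct (Nat.eq_dec b (S k)) as [->|Hbk].
    + assert (C : ch i j (A ++ B')). { apply ch_app with (S k); auto. }
      pose proof (M_ub s i j _ C). rewrite (V_app s A B' i (S k) CA) in H.
      rewrite VB2. lra.
    + assert (C1 : ch i j (A' ++ b :: B')). { apply ch_app with a; simpl; auto. split; [lia|auto]. }
      assert (C2 : ch i j (A' ++ k :: b :: B')). { apply ch_app with a; simpl; auto. split; [lia|]. split; [lia|auto]. }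
      assert (C3 : ch i j (A' ++ S k :: b :: B')). { apply ch_app with a; simpl; auto. split; [lia|]. split; [lia|auto]. }
      pose proof (M_ub s i j _ C1) as H1. pose proof (M_ub s i j _ C2) as H2. pose proof (M_ub s i j _ C3) as H3.
      rewrite (V_app s A' _ i a CA') in H1. rewrite (V_app s A' _ i a CA') in H2. rewrite (V_app s A' _ i a CA') in H3. simpl in H1, H2, H3.
      rewrite VA2, VB2.
      set (al := s k - s a). set (be := s (S k) - s k). set (ga := s b - s (S k)).
      assert (E1 : s b - s a = al + be + ga) by (unfold al, be, ga; ring).
      assert (E2 : s k - s a = al) by (unfold al; ring).
      assert (E3 : s b - s k = be + ga) by (unfold be, ga; ring).
      assert (E4 : s (S k) - s a = al + be) by (unfold al, be; ring).
      assert (E5 : s b - s (S k) = ga) by (unfold ga; ring).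
      rewrite E1 in H1. rewrite E2, E3 in H2. rewrite E4, E5 in H3. rewrite E4, E3.
      fold be.
      destruct (sign3 al be ga) as [G|[G|G]]; nra.
Qed.

Definition AllLe s N := forall l, ch 0 N l -> V s 0 l <= 1.
Definition usable s N k := exists l, ch 0 N l /\ In k l /\ V s 0 l = 1.

Lemma lattice : forall s N, (1 <= N)%nat -> AllLe s N -> (forall k, (1 <= k <= N)%nat -> usable s N k) ->
  V s 0 (fin 0 N) = 1.
Proof.
  intros s N HN HA HU.
  assert (Hfin : V s 0 (fin 0 N) <= 1) by (apply HA, (ch_fin N 0)).
  assert (H1 : 1 <= M s 0 N).
  { destruct (HU N ltac:(lia)) as [l [C [_ Vl]]]. rewrite <- Vl. apply M_ub; auto. }
  assert (Hsplit : forall k, (1 <= k < N)%nat -> M s 0 N <= M s 0 k + M s k N).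
  { intros k Hk. destruct (HU k ltac:(lia)) as [l [C [Hin Vl]]].
    destruct (M_att s 0 N) as [l0 [C0 V0]]; [lia|].
    destruct (ch_split_in l 0 N k C Hin) as [l1 [l2 [E [C1 C2]]]].
    rewrite <- V0. eapply Rle_trans. apply HA; eauto. rewrite <- Vl, E, (V_app s l1 l2 0 k C1).
    apply Rplus_le_compat; apply M_ub; auto. }
  assert (Hclaim : forall d k, (k + d = N - 1)%nat -> M s k N <= V s k (fin k (N - k))).
  { induction d; intros k Hk.
    - replace k with (N - 1)%nat by lia. destruct (M_att s (N-1) N) as [l [C Vl]]; [lia|].
      rewrite <- Vl. right. destruct l as [|b l]; simpl in C. lia. destruct C as [Hb C].
      assert (b = N) by (apply ch_le in C; lia). subst b. apply ch_nil_eq in C. subst l.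
      replace (N - (N - 1))%nat with 1%nat by lia. unfold fin. simpl. replace (S (N - 1)) with N by lia. reflexivity.
    - specialize (IHd (S k) ltac:(lia)).
      pose proof (monge1 s 0 k N ltac:(lia) ltac:(lia)).
      pose proof (Hsplit (S k) ltac:(lia)).
      replace (N - k)%nat with (S (N - S k)) by lia. unfold fin at 1. 
      change (seq (S k) (S (N - S k))) with (S k :: seq (S (S k)) (N - S k)). simpl V.
      fold (fin (S k) (N - S k)). lra. }
  specialize (Hclaim (N - 1)%nat 0%nat ltac:(lia)). replace (N - 0)%nat with N in Hclaim by lia. lra.
Qed.

Section Descent.
Variable h : (nat -> R) -> R.
Variable D : nat -> R.
Hypothesis Hh : forall s k t, h (upd s k t) = h s + t * D k.
Variable N : nat.
Hypothesis HN : (1 <= N)%nat.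

Lemma upd_other : forall s k t m, m <> k -> upd s k t m = s m.
Proof. intros. unfold upd. destruct (Nat.eqb_spec m k); auto; contradiction. Qed.
Lemma upd_same : forall s k t, upd s k t k = s k + t.
Proof. intros. unfold upd. rewrite Nat.eqb_refl. auto. Qed.

Lemma step : forall s k, AllLe s N -> (1 <= k <= N)%nat -> ~ usable s N k ->
  exists s', AllLe s' N /\ usable s' N k /\ (forall k', usable s N k' -> usable s' N k') /\
    h s <= h s' /\ s' 0%nat = s 0%nat.
Proof.
  intros s k HA Hk HnU.
  set (psi := fun t => M (upd s k t) 0 k + M (upd s k t) k N).
  assert (F1 : forall t l, ch 0 N l -> In k l -> V (upd s k t) 0 l <= psi t).
  { intros t l C Hin. destruct (ch_split_in l 0 N k C Hin) as [l1 [l2 [E [C1 C2]]]].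
    subst l. rewrite (V_app _ l1 l2 0 k C1). unfold psi. apply Rplus_le_compat; apply M_ub; auto. }
  assert (F2 : forall t, exists l, ch 0 N l /\ In k l /\ V (upd s k t) 0 l = psi t).
  { intros t. destruct (M_att (upd s k t) 0 k) as [l1 [C1 V1]]; [lia|].
    destruct (M_att (upd s k t) k N) as [l2 [C2 V2]]; [lia|].
    exists (l1 ++ l2). split. apply ch_app with k; auto. split.
    apply in_or_app; left. apply ch_last_in with 0%nat; auto; lia.
    rewrite (V_app _ l1 l2 0 k C1), V1, V2. reflexivity. }
  assert (Hs0 : forall l, V (upd s k 0) 0 l = V s 0 l).
  { intros l. apply V_ext. intros m _. unfold upd. destruct (m =? k)%nat; lra. }
  assert (Hpsi0 : psi 0 < 1).
  { destruct (Rlt_or_le (psi 0) 1) as [H|H]; auto. exfalso. apply HnU.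
    destruct (F2 0) as [l [C [Hin Vl]]]. exists l. split; auto. split; auto.
    rewrite Hs0 in Vl. specialize (HA l C). lra. }
  set (sg := if Rle_dec 0 (D k) then 1 else -1).
  assert (Hsg : 0 <= sg * D k /\ sg * sg = 1).
  { unfold sg. destruct (Rle_dec 0 (D k)); split; nra. }
  set (T := Rabs (s k - s 0%nat) + 1).
  set (phi := fun u => psi (sg * u) - 1).
  assert (Hc : continuity phi).
  { unfold phi, psi. apply cont_minus; [|apply cont_const].
    apply cont_plus.
    - apply (continuity_comp (fun u => sg * u) (fun t => M (upd s k t) 0 k)).
      apply cont_mult. apply cont_const. apply cont_id. apply M_cont.
    - apply (continuity_comp (fun u => sg * u) (fun t => M (upd s k t) k N)).
      apply cont_mult. apply cont_const. apply cont_id. apply M_cont. }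
  assert (HT : 0 <= phi T).
  { unfold phi. destruct (M_att s k N) as [r [Cr _]]; [lia|].
    assert (C : ch 0 N (k :: r)) by (simpl; split; [lia|auto]).
    pose proof (F1 (sg * T) (k :: r) C (or_introl eq_refl)).
    simpl V in H. rewrite upd_same, upd_other in H by lia.
    pose proof (V_ge0 (upd s k (sg * T)) r k).
    assert (1 <= (s k + sg * T - s 0%nat)^2).
    { unfold T. unfold sg. destruct (Rle_dec 0 (D k));
      destruct (Rcase_abs (s k - s 0%nat)) as [Ha|Ha];
      [rewrite (Rabs_left _ Ha)|rewrite (Rabs_right _ Ha)|rewrite (Rabs_left _ Ha)|rewrite (Rabs_right _ Ha)]; nra. }
    lra. }
  assert (H0 : phi 0 < 0). { unfold phi. rewrite Rmult_0_r. lra. }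
  assert (HT0 : 0 <= T) by (unfold T; pose proof (Rabs_pos (s k - s 0%nat)); lra).
  destruct (IVT_cor phi 0 T Hc HT0 ltac:(nra)) as [u [Hu Hphi]].
  set (t := sg * u). exists (upd s k t).
  assert (Hpsi : psi t = 1) by (unfold phi in Hphi; unfold t; lra).
  assert (Hnot : forall l, ~ In k l -> V (upd s k t) 0 l = V s 0 l).
  { intros l Hl. apply V_ext. intros m [->|Hm]. apply upd_other; lia. apply upd_other. intro; subst; contradiction. }
  split; [|split; [|split; [|split]]].
  - intros l C. destruct (in_dec Nat.eq_dec k l) as [Hin|Hin].
    + rewrite <- Hpsi. apply F1; auto.
    + rewrite Hnot by auto. apply HA; auto.
  - destruct (F2 t) as [l [C [Hin Vl]]]. exists l; repeat split; auto. lra.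
  - intros k' [l [C [Hin Vl]]]. exists l; split; auto; split; auto.
    assert (~ In k l). { intro Hk'. apply HnU. exists l; auto. }
    rewrite Hnot; auto.
  - rewrite Hh. unfold t. assert (0 <= sg * u * D k) by nra. lra.
  - apply upd_other; lia.
Qed.

Lemma descent : forall U s, AllLe s N -> (forall k, (1 <= k <= N)%nat -> ~ In k U -> usable s N k) ->
  exists s', AllLe s' N /\ (forall k, (1 <= k <= N)%nat -> usable s' N k) /\ h s <= h s' /\ s' 0%nat = s 0%nat.
Proof.
  induction U as [|k U IH]; intros s HA HU.
  - exists s. split; [auto|split; [intros k Hk; apply HU; auto|split; [lra|reflexivity]]].
  - destruct (classic (usable s N k)) as [Hk|Hk].
    + apply IH; auto. intros k' Hk' Hn. destruct (Nat.eq_dec k' k) as [->|Hne]; auto.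
      apply HU; auto. intros [E|E]; [congruence|contradiction].
    + destruct (Compare_dec.le_lt_dec 1 k) as [H1|H1]; [destruct (Compare_dec.le_lt_dec k N) as [H2|H2]|].
      * destruct (step s k HA ltac:(lia) Hk) as [s1 [HA1 [HU1 [Hpres [Hh1 H01]]]]].
        destruct (IH s1 HA1) as [s' [HA' [HU' [Hh' H0']]]].
        { intros k' Hk' Hn. destruct (Nat.eq_dec k' k) as [->|Hne]; auto.
          apply Hpres, HU; auto. intros [E|E]; [congruence|contradiction]. }
        exists s'. repeat split; auto. lra. congruence.
      * apply IH; auto. intros k' Hk' Hn. apply HU; auto. intros [E|E]; [lia|contradiction].
      * apply IH; auto. intros k' Hk' Hn. apply HU; auto. intros [E|E]; [lia|contradiction].
Qed.

Lemma finite_core : forall s, AllLe s N ->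
  exists s', AllLe s' N /\ V s' 0 (fin 0 N) = 1 /\ h s <= h s' /\ s' 0%nat = s 0%nat.
Proof.
  intros s HA. destruct (descent (seq 1 N) s HA) as [s' [HA' [HU' [Hh' H0']]]].
  { intros k Hk Hn. exfalso. apply Hn. apply in_seq. lia. }
  exists s'. repeat split; auto. apply lattice; auto.
Qed.
End Descent.


Fixpoint fam (i : nat) (l : list nat) : list interval :=
  match l with [] => [] | b :: l' => Ival i (Some (b - 1)%nat) :: fam b l' end.



Lemma fam_lo : forall l i j I, ch i j l -> In I (fam i l) -> (i <= ilo I)%nat.
Proof.
  induction l; simpl; intros i j I C H; [contradiction|]. destruct C as [Ha C].
  destruct H as [<-|H]; simpl; [lia|]. apply (IHl a j) in H; [lia|]. exact C.
Qed.

Lemma fam_adm : forall l i j, ch i j l -> admissible_family (fam i l).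
Proof.
  induction l; simpl; intros i j C. apply adm_nil.
  destruct C as [Ha C]. destruct (IHl a j C) as [HV HD]. split.
  - constructor; auto. unfold valid_interval; simpl; lia.
  - constructor; auto. apply Forall_forall. intros I HI k [Hk1 Hk2].
    pose proof (fam_lo l a j I C HI). unfold in_interval in Hk1, Hk2; simpl in Hk1.
    destruct Hk2 as [Hk2 _]. lia.
Qed.

Lemma sq_sum_fam : forall x l i j, ch i j l -> sq_sum x (fam i l) = V (ps x) i l.
Proof.
  induction l; intros i j C. reflexivity. destruct C as [Ha C].
  change (fam i (a::l)) with (Ival i (Some (a-1)%nat) :: fam a l).
  change (V (ps x) i (a :: l)) with ((ps x a - ps x i)^2 + V (ps x) a l).
  rewrite sq_sum_cons, (IHl a j C), isum_fin by lia. rewrite pow2_abs.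
  replace (S (a - 1)%nat) with a by lia. reflexivity.
Qed.

Definition ev (i : nat) : nat -> R := fun n => if (n =? i)%nat then 1 else 0.
Definition trunc (N : nat) (y : nat -> R) : nat -> R := fun n => if (n <? N)%nat then y n else 0.

Lemma ps_ev : forall i m, ps (ev i) m = if (i <? m)%nat then 1 else 0.
Proof.
  intros i m; induction m; simpl. destruct i; reflexivity.
  rewrite IHm. unfold ev. destruct (Nat.ltb_spec i m); destruct (Nat.eqb_spec m i); destruct (Nat.ltb_spec i (S m)); try lia; lra.
Qed.

Lemma isum_ev : forall i I, valid_interval I -> isum (ev i) I = if in_intervalb I i then 1 else 0.
Proof.
  intros i [lo [b|]] HV; unfold valid_interval in HV; simpl in HV.
  - rewrite isum_fin by auto. rewrite !ps_ev. unfold in_intervalb; simpl.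
    destruct (Nat.ltb_spec i (S b)); destruct (Nat.ltb_spec i lo); destruct (Nat.leb_spec lo i); destruct (Nat.leb_spec i b); simpl; try lia; lra.
  - assert (HS : ex_series (ev i)). { apply ex_series_fin with (S i). intros n Hn. unfold ev. destruct (Nat.eqb_spec n i); lia || lra. }
    rewrite isum_inf by auto.
    rewrite (Series_fin (ev i) (S i)). rewrite !ps_ev. unfold in_intervalb; simpl.
    destruct (Nat.ltb_spec i (S i)); destruct (Nat.ltb_spec i lo); destruct (Nat.leb_spec lo i); simpl; try lia; lra.
    intros n Hn. unfold ev. destruct (Nat.eqb_spec n i); lia || lra.
Qed.

Lemma tails_fin : forall y N, (forall n, (N <= n)%nat -> y n = 0) -> tails_ok y.
Proof. intros y N H a. apply ex_series_fin with N. intros n Hn. apply H. lia. Qed.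

Lemma in_J_ev : forall i, in_J (ev i).
Proof.
  intros i. split.
  - apply tails_fin with (S i). intros n Hn. unfold ev. destruct (Nat.eqb_spec n i); lia || lra.
  - exists 1. intros F [HV HD]. induction HD as [|I F HI HD IH].
    + rewrite sq_sum_nil; lra.
    + inversion HV; subst. rewrite sq_sum_cons, isum_ev by auto.
      destruct (in_intervalb I i) eqn:E.
      * apply in_intervalb_spec in E.
        assert (sq_sum (ev i) F = 0).
        { clear IH. induction HI. reflexivity. inversion H2; subst. inversion HD; subst.
          rewrite sq_sum_cons, isum_ev by auto. rewrite IHHI; auto.
          destruct (in_intervalb x i) eqn:E2. apply in_intervalb_spec in E2. exfalso; apply (H i); auto.
          rewrite Rabs_R0; simpl; lra. }
        rewrite H. rewrite Rabs_R1. simpl; lra.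
      * rewrite Rabs_R0. specialize (IH H2). simpl; lra.
Qed.

Section Lin.
Variable f : (nat -> R) -> R.
Hypothesis hf : in_Jdual f.

Definition cf (i : nat) : R := f (ev i).

Lemma trunc_lin : forall N y, in_J (trunc N y) /\ f (trunc N y) = ps (fun i => cf i * y i) N.
Proof.
  destruct hf as [Hadd [Hsc _]].
  induction N; intros y.
  - assert (E : trunc 0 y = fun n => 0 * ev 0 n).
    { apply functional_extensionality; intro n. unfold trunc. simpl. lra. }
    rewrite E. split. apply in_J_scal, in_J_ev. rewrite Hsc by apply in_J_ev. simpl; lra.
  - assert (E : trunc (S N) y = fun n => trunc N y n + y N * ev N n).
    { apply functional_extensionality; intro n. unfold trunc, ev.
      destruct (Nat.ltb_spec n (S N)); destruct (Nat.ltb_spec n N); destruct (Nat.eqb_spec n N); subst; try lia; lra. }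
    destruct (IHN y) as [HJ Hf]. rewrite E. split.
    + apply in_J_plus; auto. apply in_J_scal, in_J_ev.
    + rewrite Hadd; auto. rewrite Hsc by apply in_J_ev. rewrite Hf. simpl. unfold cf. lra.
      apply in_J_scal, in_J_ev.
Qed.
End Lin.


Lemma ps_min_supp : forall z N m, (forall n, (N <= n)%nat -> z n = 0) -> ps z m = ps z (Nat.min m N).
Proof.
  intros z N m H. destruct (Nat.le_ge_cases m N).
  - rewrite Nat.min_l; auto.
  - rewrite Nat.min_r by auto. apply ps_const_after; auto.
Qed.

Definition eI (I : interval) (N : nat) : nat :=
  match ihi I with Some b => Nat.max (ilo I) (Nat.min N (S b)) | None => Nat.max (ilo I) N end.

Lemma Series_restrict_supp : forall z N I, (forall n, (N <= n)%nat -> z n = 0) -> valid_interval I ->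
  Series (restrict z I) = ps z (Nat.min (eI I N) N) - ps z (Nat.min (ilo I) N).
Proof.
  intros z N [lo [b|]] H HV; unfold valid_interval in HV; simpl in HV.
  - rewrite (Series_fin _ N). rewrite ps_restrict_fin by auto. unfold eI; simpl.
    rewrite (ps_min_supp z N (Nat.max lo (Nat.min N (S b)))), (ps_min_supp z N lo); auto.
    intros n Hn. unfold restrict. destruct (in_intervalb _ n); auto.
  - rewrite (Series_fin _ N). rewrite ps_restrict_inf. unfold eI; simpl.
    rewrite (ps_min_supp z N (Nat.max lo N)), (ps_min_supp z N lo); auto.
    intros n Hn. unfold restrict. destruct (in_intervalb _ n); auto.
Qed.

Lemma eI_ge : forall I N, valid_interval I -> (ilo I <= eI I N)%nat.
Proof. intros [lo [b|]] N HV; unfold eI; simpl; lia. Qed.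

Lemma npr_core : forall s N A E, AllLe s N -> V s 0 (fin 0 N) = 1 -> (A <= E <= N)%nat ->
  (s E - s A)^2 <= ps (dsq s) E - ps (dsq s) A.
Proof.
  intros s N A E HA Hf HAE.
  destruct (Nat.eq_dec A E) as [->|Hne]. { replace (s E - s E) with 0 by ring. simpl; lra. }
  assert (C : ch 0 N (fin 0 A ++ E :: fin E (N - E))).
  { apply ch_app with A. apply (ch_fin A 0). simpl. split. lia.
    replace N with (E + (N - E))%nat at 1 by lia. apply ch_fin. }
  specialize (HA _ C). rewrite (V_app s _ _ 0 A (ch_fin A 0)) in HA. simpl V in HA.
  rewrite !V_fin in HA. rewrite V_fin in Hf.
  replace (0 + A)%nat with A in HA by lia. replace (E + (N - E))%nat with N in HA by lia.
  simpl in Hf, HA. lra.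
Qed.

Section Hard.
Variable f : (nat -> R) -> R.
Hypothesis hf : in_Jdual f.

Definition hS (N : nat) (s : nat -> R) := ps (fun i => cf f i * (s (S i) - s i)) N.
Definition ind (k m : nat) : R := if (m =? k)%nat then 1 else 0.
Definition DS (N k : nat) := ps (fun i => cf f i * (ind k (S i) - ind k i)) N.

Lemma hS_upd : forall N s k t, hS N (upd s k t) = hS N s + t * DS N k.
Proof.
  intros. unfold hS, DS. rewrite <- ps_scal, <- ps_plus. apply ps_ext. intros n _.
  unfold upd, ind. destruct (S n =? k)%nat; destruct (n =? k)%nat; ring.
Qed.

Lemma hard_fin : forall x N, in_J x -> (forall F, admissible_family F -> sq_sum x F <= 1) -> (1 <= N)%nat ->
  exists y, in_J y /\ NPR_hereditary y /\ l2norm y = 1 /\ f (trunc N x) <= f y.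
Proof.
  intros x N HJ Hb HN.
  set (s := ps x).
  assert (HA : AllLe s N).
  { intros l C. unfold s. rewrite <- (sq_sum_fam x l 0 N C). apply Hb. apply (fam_adm l 0 N C). }
  destruct (finite_core (hS N) (DS N) (hS_upd N) N HN s HA) as [s' [HA' [Hfin [Hh H0]]]].
  assert (H0' : s' 0%nat = 0) by (rewrite H0; reflexivity).
  set (yv := fun n => s' (S n) - s' n). set (y := trunc N yv).
  exists y.
  assert (Hsupp : forall n, (N <= n)%nat -> y n = 0).
  { intros n Hn. unfold y, trunc. destruct (Nat.ltb_spec n N); [lia|auto]. }
  assert (Hpsy : forall m, (m <= N)%nat -> ps y m = s' m).
  { induction m; intros Hm. simpl; auto. simpl. rewrite IHm by lia. unfold y, trunc, yv.
    destruct (Nat.ltb_spec m N); [|lia]. ring. }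
  set (Y2 := fun n => (Rabs (y n))^2).
  assert (Hsupp2 : forall n, (N <= n)%nat -> Y2 n = 0).
  { intros n Hn. unfold Y2. rewrite Hsupp by auto. rewrite Rabs_R0. simpl; ring. }
  assert (HpsY2 : forall m, (m <= N)%nat -> ps Y2 m = ps (dsq s') m).
  { intros m Hm. apply ps_ext. intros n Hn. unfold Y2, y, trunc, dsq, yv.
    destruct (Nat.ltb_spec n N); [|lia]. apply pow2_abs. }
  split; [|split; [|split]].
  - apply (trunc_lin f hf N yv).
  - intros I HV. unfold NPR.
    rewrite (Series_restrict_supp y N I Hsupp HV).
    rewrite (Series_ext (fun n => Rabs (restrict y I n) ^ 2) (restrict Y2 I)).
    2: { intro n. unfold restrict, Y2. destruct (in_intervalb I n); auto. rewrite Rabs_R0; simpl; ring. }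
    rewrite (Series_restrict_supp Y2 N I Hsupp2 HV).
    pose proof (eI_ge I N HV).
    rewrite !Hpsy, !HpsY2 by lia. rewrite pow2_abs.
    apply npr_core with N; auto. lia.
  - unfold l2norm. fold Y2. rewrite (Series_fin Y2 N Hsupp2). rewrite HpsY2 by lia.
    rewrite V_fin in Hfin. simpl in Hfin. replace (ps (dsq s') N) with 1 by lra. apply sqrt_1.
  - destruct (trunc_lin f hf N x) as [_ E1]. destruct (trunc_lin f hf N yv) as [_ E2].
    unfold y. rewrite E1, E2.
    replace (ps (fun i => cf f i * x i) N) with (hS N s).
    replace (ps (fun i => cf f i * yv i) N) with (hS N s'). auto.
    reflexivity.
    unfold hS. apply ps_ext. intros n _. unfold s. simpl. ring.
Qed.
End Hard.


Definition tailv (N : nat) (z : nat -> R) : nat -> R := fun n => if (n <? N)%nat then 0 else z n.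

Lemma ps_tail : forall N z m, ps (tailv N z) m = ps z (Nat.max m N) - ps z N.
Proof.
  intros N z m; induction m.
  - replace (Nat.max 0 N) with N by lia. simpl; lra.
  - change (ps (tailv N z) (S m)) with (ps (tailv N z) m + tailv N z m). rewrite IHm. unfold tailv. destruct (Nat.ltb_spec m N).
    + replace (Nat.max (S m) N) with N by lia. replace (Nat.max m N) with N by lia. lra.
    + replace (Nat.max (S m) N) with (S m) by lia. replace (Nat.max m N) with m by lia. simpl; lra.
Qed.

Lemma is_series_tail : forall N z, ex_series z -> is_series (tailv N z) (Series z - ps z N).
Proof.
  intros N z Hz. apply is_series_ps.
  apply is_lim_seq_ext_loc with (u := fun m => ps z m - ps z N).
  - exists N. intros n Hn. rewrite ps_tail. replace (Nat.max n N) with n by lia. auto.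
  - apply is_lim_seq_minus'. apply is_series_ps, Series_correct; auto. apply is_lim_seq_const.
Qed.

Lemma ex_series_tail : forall N z, ex_series z -> ex_series (tailv N z).
Proof. intros; eexists; apply is_series_tail; auto. Qed.

Lemma isum_tail_fin : forall N z lo b, (lo <= b)%nat ->
  isum (tailv N z) (Ival lo (Some b)) = ps z (Nat.max (S b) N) - ps z (Nat.max lo N).
Proof. intros. rewrite isum_fin, !ps_tail by auto. lra. Qed.

Lemma isum_tail_inf : forall N z lo, ex_series z ->
  isum (tailv N z) (Ival lo None) = Series z - ps z (Nat.max lo N).
Proof.
  intros. rewrite isum_inf by (apply ex_series_tail; auto).
  rewrite (is_series_unique _ _ (is_series_tail N z H)), ps_tail. lra.
Qed.

Definition conv (N B : nat) (I : interval) : option interval :=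
  match ihi I with
  | Some b => if (b <? N)%nat then None else Some (Ival (Nat.max (ilo I) N) (Some b))
  | None => Some (Ival (Nat.max (ilo I) N) (Some B))
  end.

Fixpoint convl (N B : nat) (F : list interval) : list interval :=
  match F with
  | [] => []
  | K :: F' => match conv N B K with None => convl N B F' | Some J => J :: convl N B F' end
  end.

Definition tv (z : nat -> R) (N B : nat) (I : interval) : R :=
  match conv N B I with None => 0 | Some J => (Rabs (isum z J))^2 end.

Lemma sq_sum_convl : forall z N B F,
  sq_sum z (convl N B F) = fold_right (fun I acc => tv z N B I + acc) 0 F.
Proof.
  intros z N B F; induction F as [|I F IH]. reflexivity. cbn [convl fold_right].
  unfold tv at 1. destruct (conv N B I); rewrite ?sq_sum_cons, IH; lra.
Qed.

Lemma tv_lim : forall z N I, ex_series z -> valid_interval I ->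
  is_lim_seq (fun B => tv z N B I) ((Rabs (isum (tailv N z) I))^2).
Proof.
  intros z N [lo [b|]] Hz HV; unfold valid_interval in HV; simpl in HV; unfold tv, conv; cbn [ilo ihi].
  - destruct (Nat.ltb_spec b N).
    + rewrite isum_tail_fin by auto. replace (Nat.max (S b) N) with N by lia.
      replace (Nat.max lo N) with N by lia.
      replace (Rabs (ps z N - ps z N) ^ 2) with 0 by (replace (ps z N - ps z N) with 0 by ring; rewrite Rabs_R0; ring).
      apply is_lim_seq_const.
    + rewrite isum_tail_fin by auto. rewrite isum_fin by lia.
      replace (Nat.max (S b) N) with (S b) by lia. apply is_lim_seq_const.
  - rewrite isum_tail_inf by auto. rewrite pow2_abs.
    apply is_lim_seq_ext_loc with (u := fun B => (ps z (S B) - ps z (Nat.max lo N)) * (ps z (S B) - ps z (Nat.max lo N))).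
    + exists (Nat.max lo N). intros n Hn. rewrite isum_fin by lia. rewrite pow2_abs. ring.
    + replace ((Series z - ps z (Nat.max lo N))^2) with ((Series z - ps z (Nat.max lo N)) * (Series z - ps z (Nat.max lo N))) by ring.
      assert (Hl : is_lim_seq (fun B => ps z (S B) - ps z (Nat.max lo N)) (Series z - ps z (Nat.max lo N))).
      { apply is_lim_seq_minus'. 2: apply is_lim_seq_const.
        apply (is_lim_seq_incr_1 (ps z)). apply is_series_ps, Series_correct; auto. }
      apply is_lim_seq_mult'; auto.
Qed.

Lemma convl_lim : forall z N F, ex_series z -> List.Forall valid_interval F ->
  is_lim_seq (fun B => sq_sum z (convl N B F)) (sq_sum (tailv N z) F).
Proof.
  intros z N F Hz HV. induction HV as [|I F HI HV IH].
  - apply is_lim_seq_ext with (u := fun _ => 0). intro; reflexivity. apply is_lim_seq_const.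
  - apply is_lim_seq_ext with (u := fun B => tv z N B I + sq_sum z (convl N B F)).
    + intro B. rewrite !sq_sum_convl. reflexivity.
    + rewrite sq_sum_cons. apply is_lim_seq_plus'; auto. apply tv_lim; auto.
Qed.

Definition bnd (F : list interval) : nat :=
  fold_right (fun I acc => Nat.max (Nat.max (ilo I) (match ihi I with Some b => b | None => 0 end)) acc) 0%nat F.

Lemma bnd_ge : forall F I, In I F -> (ilo I <= bnd F)%nat /\ (forall b, ihi I = Some b -> (b <= bnd F)%nat).
Proof.
  induction F as [|J F IH]; simpl; intros I H; [contradiction|]. destruct H as [<-|H].
  - split. lia. intros b E. rewrite E. lia.
  - destruct (IH I H) as [H1 H2]. split. lia. intros b E. specialize (H2 b E). lia.
Qed.

Lemma conv_sub : forall N B I J k, conv N B I = Some J -> in_interval J k -> in_interval I k.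
Proof.
  intros N B [lo [b|]] J k E H; unfold conv in E; simpl in E.
  - destruct (b <? N)%nat; inversion E; subst. unfold in_interval in *; simpl in *. lia.
  - inversion E; subst. unfold in_interval in *; simpl in *. split; auto. lia.
Qed.

Lemma convl_in : forall N B F J, In J (convl N B F) -> exists I, In I F /\ conv N B I = Some J.
Proof.
  induction F as [|I F IH]; simpl; intros J H; [contradiction|].
  destruct (conv N B I) eqn:E.
  - destruct H as [<-|H]. exists I; auto. destruct (IH J H) as [I' [H1 H2]]. exists I'; auto.
  - destruct (IH J H) as [I' [H1 H2]]. exists I'; auto.
Qed.

Lemma convl_adm : forall N B F, admissible_family F -> (N <= B)%nat -> (bnd F <= B)%nat ->
  admissible_family (convl N B F).
Proof.
  intros N B F [HV HD] HNB HB. split.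
  - apply Forall_forall. intros J HJ. destruct (convl_in N B F J HJ) as [I [HI E]].
    destruct (bnd_ge F I HI) as [H1 H2]. rewrite Forall_forall in HV. specialize (HV I HI).
    destruct I as [lo [b|]]; unfold conv in E; unfold valid_interval in HV; simpl in *.
    + destruct (Nat.ltb_spec b N); inversion E; subst. unfold valid_interval; simpl. lia.
    + inversion E; subst. unfold valid_interval; simpl. lia.
  - clear HV HB. induction HD as [|I F HI HD IH]; simpl. constructor.
    destruct (conv N B I) eqn:E; auto. constructor; auto.
    apply Forall_forall. intros J' HJ' k [Hk1 Hk2].
    destruct (convl_in N B F J' HJ') as [I' [HI' E']].
    rewrite Forall_forall in HI. apply (HI I' HI' k). split.
    eapply conv_sub; eauto. eapply conv_sub; eauto.
Qed.

Lemma convl_window : forall N B F J, (bnd F <= B)%nat -> In J (convl N B F) ->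
  (N <= ilo J)%nat /\ exists c, ihi J = Some c /\ (c <= B)%nat.
Proof.
  intros N B F J HB HJ. destruct (convl_in N B F J HJ) as [I [HI E]].
  destruct (bnd_ge F I HI) as [H1 H2].
  destruct I as [lo [b|]]; unfold conv in E; simpl in *.
  - destruct (Nat.ltb_spec b N); inversion E; subst; simpl. split. lia. exists b. split; auto. specialize (H2 b eq_refl); lia.
  - inversion E; subst; simpl. split. lia. exists B; auto.
Qed.

Lemma sq_sum_app : forall z G1 G2, sq_sum z (G1 ++ G2) = sq_sum z G1 + sq_sum z G2.
Proof. intros z G1 G2; induction G1; [change ([] ++ G2) with G2; rewrite sq_sum_nil; lra|]. rewrite <- app_comm_cons, !sq_sum_cons, IHG1; lra. Qed.

Lemma FOP_app : forall (A : Type) (Rl : A -> A -> Prop) l1 l2, ForallOrdPairs Rl l1 -> ForallOrdPairs Rl l2 ->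
  (forall a b, In a l1 -> In b l2 -> Rl a b) -> ForallOrdPairs Rl (l1 ++ l2).
Proof.
  intros A Rl l1 l2 H1 H2 H. induction H1; simpl; auto.
  constructor. apply Forall_app; split; auto. apply Forall_forall; intros; apply H; simpl; auto.
  apply IHForallOrdPairs. intros; apply H; simpl; auto.
Qed.

Lemma window_step : forall z N F delta, ex_series z -> admissible_family F ->
  delta < sq_sum (tailv N z) F ->
  exists B G, admissible_family G /\ (forall J, In J G -> (N <= ilo J)%nat /\ exists c, ihi J = Some c /\ (c <= B)%nat)
    /\ delta < sq_sum z G.
Proof.
  intros z N F delta Hz [HV HD] Hlt.
  pose proof (convl_lim z N F Hz HV) as Hl.
  apply is_lim_seq_spec in Hl.
  assert (Heps : 0 < sq_sum (tailv N z) F - delta) by lra.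
  destruct (Hl (mkposreal _ Heps)) as [N0 HN0]. simpl in HN0.
  set (B := Nat.max (Nat.max N0 (bnd F)) N).
  exists B, (convl N B F). split; [|split].
  - apply convl_adm; [split; auto| lia| lia].
  - intros J HJ. apply convl_window with F; auto. lia.
  - specialize (HN0 B ltac:(lia)). apply Rabs_lt_between in HN0. lra.
Qed.

Lemma tail_small : forall z delta, in_J z -> 0 < delta ->
  exists N, (1 <= N)%nat /\ forall F, admissible_family F -> sq_sum (tailv N z) F <= delta.
Proof.
  intros z delta HJ Hd. pose proof (ex_series_of_J z HJ) as Hz.
  destruct (classic (exists N, (1 <= N)%nat /\ forall F, admissible_family F -> sq_sum (tailv N z) F <= delta)) as [H|H]; auto.
  exfalso.
  assert (Bad : forall N, (1 <= N)%nat -> exists F, admissible_family F /\ delta < sq_sum (tailv N z) F).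
  { intros N HN. apply NNPP. intro Hn. apply H. exists N. split; auto. intros F HF.
    apply Rnot_lt_le. intro Hlt. apply Hn. exists F; auto. }
  assert (Acc : forall k : nat, exists B G, (1 <= B)%nat /\ admissible_family G /\
            (forall J, In J G -> exists c, ihi J = Some c /\ (c < B)%nat) /\ INR k * delta <= sq_sum z G).
  { induction k.
    - exists 1%nat, []. split; auto. split. apply adm_nil. split. intros J []. rewrite sq_sum_nil. simpl; lra.
    - destruct IHk as [B [G [HB [HG [HW Hv]]]]].
      destruct (Bad B HB) as [F [HF HFv]].
      destruct (window_step z B F delta Hz HF HFv) as [B' [G' [HG' [HW' Hv']]]].
      exists (S (Nat.max B' B)), (G ++ G'). split. lia. split; [|split].
      + destruct HG as [HV1 HD1]. destruct HG' as [HV2 HD2]. split.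
        apply Forall_app; auto. apply FOP_app; auto.
        intros I J HI HJ0 kk [Hk1 Hk2]. destruct (HW I HI) as [c [Ec Hc]].
        destruct (HW' J HJ0) as [HJlo _]. unfold in_interval in *. rewrite Ec in Hk1. lia.
      + intros J HJ1. apply in_app_or in HJ1. destruct HJ1 as [HJ1|HJ1].
        destruct (HW J HJ1) as [c [Ec Hc]]. exists c; split; auto; lia.
        destruct (HW' J HJ1) as [_ [c [Ec Hc]]]. exists c; split; auto; lia.
      + rewrite sq_sum_app, S_INR. lra. }
  destruct HJ as [_ [Mb HMb]].
  destruct (archimed_cor1 (delta / (Rabs Mb + 1))) as [k [Hk Hk0]].
  { apply Rdiv_lt_0_compat; auto. pose proof (Rabs_pos Mb); lra. }
  destruct (Acc k) as [B [G [_ [HG [_ Hv]]]]].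
  specialize (HMb G HG).
  assert (HkR : 0 < INR k) by (apply lt_0_INR; lia).
  assert (Rabs Mb + 1 < INR k * delta).
  { assert (0 < Rabs Mb + 1) by (pose proof (Rabs_pos Mb); lra).
    apply Rmult_lt_compat_l with (r := INR k * (Rabs Mb + 1)) in Hk; [|nra].
    field_simplify in Hk; lra. }
  pose proof (Rle_abs Mb). lra.
Qed.


Lemma rbar_eps : forall (E : R -> Prop) a, (forall eps, 0 < eps -> exists r, E r /\ a <= r + eps) ->
  Rbar_le a (Lub_Rbar E).
Proof.
  intros E a H. destruct (Lub_Rbar_correct E) as [Hub _].
  destruct (Lub_Rbar E) as [l| |] eqn:El; simpl; auto.
  - destruct (Rle_or_lt a l) as [Hle|Hlt]; auto. exfalso.
    destruct (H ((a - l)/2) ltac:(lra)) as [r [Er Har]]. specialize (Hub r Er). simpl in Hub. lra.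
  - destruct (H 1 ltac:(lra)) as [r [Er _]]. specialize (Hub r Er). simpl in Hub. auto.
Qed.

Lemma ex_series_nonneg : forall a, (forall n, 0 <= a n) -> Series a <> 0 -> ex_series a.
Proof.
  intros a Ha Hs.
  assert (Hex : ex_lim_seq (sum_n a)).
  { apply ex_lim_seq_incr. intro n. rewrite !sum_n_ps. simpl. pose proof (Ha (S n)). lra. }
  pose proof (Lim_seq_correct _ Hex) as Hl. unfold Series in Hs.
  destruct (Lim_seq (sum_n a)) as [l| |]; simpl in Hs; try (exfalso; apply Hs; reflexivity).
  exists l. exact Hl.
Qed.

Theorem main_thm (f : (nat -> R) -> R) (hf : in_Jdual f) :
  Jdualnorm f =
  Lub_Rbar (fun r => exists x, in_J x /\ NPR_hereditary x /\ l2norm x = 1 /\ r = f x).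
Proof.
  set (S := fun r => exists x, in_J x /\ NPR_hereditary x /\ l2norm x = 1 /\ r = f x).
  pose proof hf as hf0. destruct hf0 as [Hadd [Hsc [C HC]]].
  assert (Key : forall z, in_J z -> (forall F, admissible_family F -> sq_sum z F <= 1) ->
            Rbar_le (f z) (Lub_Rbar S)).
  { intros z HJ Hb. apply rbar_eps. intros eps Heps.
    set (del := (eps / (Rabs C + 1))^2).
    assert (HC1 : 0 < Rabs C + 1) by (pose proof (Rabs_pos C); lra).
    assert (Hdel : 0 < del). { unfold del. apply pow_lt. apply Rdiv_lt_0_compat; lra. }
    destruct (tail_small z del HJ Hdel) as [N [HN HT]].
    destruct (trunc_lin f hf N z) as [HJt _].
    assert (HJtail : in_J (tailv N z)).
    { replace (tailv N z) with (fun n => z n + (-1) * trunc N z n).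
      apply in_J_plus; auto. apply in_J_scal; auto.
      apply functional_extensionality; intro n. unfold tailv, trunc. destruct (n <? N)%nat; lra. }
    assert (Ez : z = fun n => trunc N z n + tailv N z n).
    { apply functional_extensionality; intro n. unfold tailv, trunc. destruct (n <? N)%nat; lra. }
    destruct (hard_fin f hf z N HJ Hb HN) as [y [HJy [HNy [Hly Hfy]]]].
    exists (f y). split. exists y; auto.
    assert (Hft : Rabs (f (tailv N z)) <= Rabs C * sqrt del).
    { eapply Rle_trans. apply HC; auto.
      pose proof (Jnorm_le (tailv N z) del HT). assert (0 <= Jnorm (tailv N z)) by (unfold Jnorm; apply sqrt_pos).
      pose proof (Rle_abs C). pose proof (Rabs_pos C). nra. }
    assert (Hsq : sqrt del = eps / (Rabs C + 1)).
    { unfold del. apply sqrt_pow2. apply Rlt_le, Rdiv_lt_0_compat; lra. }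
    rewrite Hsq in Hft.
    assert (Rabs C * (eps / (Rabs C + 1)) <= eps).
    { unfold Rdiv. rewrite <- Rmult_assoc. apply Rmult_le_reg_r with (Rabs C + 1); auto.
      rewrite Rmult_assoc, Rinv_l by lra. pose proof (Rabs_pos C). nra. }
    rewrite Ez at 1. rewrite Hadd; auto. pose proof (Rle_abs (f (tailv N z))). lra. }
  apply is_lub_Rbar_unique. split.
  - intros r [x [HJ [Hn ->]]].
    assert (Hb : forall F, admissible_family F -> sq_sum x F <= 1) by (intros; apply Jnorm_sq_bound; auto).
    unfold Rabs. destruct (Rcase_abs (f x)).
    + assert (HJm : in_J (fun n => -1 * x n)) by (apply in_J_scal; auto).
      pose proof (Key _ HJm) as K. rewrite Hsc in K by auto.
      replace (- f x) with (-1 * f x) by ring. apply K.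
      intros F HF. rewrite sq_sum_scal. specialize (Hb F HF). simpl; lra.
    + apply Key; auto.
  - intros b Hb. apply (proj2 (Lub_Rbar_correct S)).
    intros r [y [HJ [HN [Hl ->]]]].
    apply Rbar_le_trans with (Rabs (f y)). simpl. apply Rle_abs.
    apply Hb. exists y. split; auto. split; auto.
    assert (HS : Series (fun n => Rabs (y n) ^ 2) = 1).
    { unfold l2norm in Hl. set (q := Series (fun n => Rabs (y n) ^ 2)) in *.
      destruct (Rle_or_lt q 0). rewrite sqrt_neg_0 in Hl by auto. lra.
      pose proof (sqrt_sqrt q ltac:(lra)). rewrite Hl in H0. lra. }
    replace 1 with (sqrt 1) by apply sqrt_1. apply Jnorm_le.
    intros F HF. rewrite <- HS. apply easy_bound; auto.
    apply ex_series_of_J; auto.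
    apply ex_series_nonneg. intros; apply pow2_ge_0. rewrite HS; lra.
Qed.


Theorem corollary3p20 (f : (nat -> R) -> R) (hf : in_Jdual f) :
  Jdualnorm f =
  Lub_Rbar (fun r => exists x, in_J x /\ NPR_hereditary x /\ l2norm x = 1 /\ r = f x).
Proof.
  exact (main_thm f hf).
Qed.
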